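(* Consider a discounted Markov decision process with Borel state space $\mathcal{S}$, action sets $\mathcal{A}(s)$, transition kernel $P(\cdot\mid\alpha,s)$, bounded reward $r(\alpha,s)$, and discount factor $\beta\in(0,1)$; fix $\tau\in(0,1)$ and a stationary policy $\pi(\cdot\mid s)$. Let $\mathcal{T}^{\tau}_{\pi}$ and $\mathcal{T}^{\tau}_{*}$ be the operators on bounded functions $V:\mathcal{S}\to\mathbb{R}$ given by $$(\mathcal{T}^{\tau}_{\pi}V)(s)=Q_{\tau}\big[r(\alpha,s)+\beta V(s')\,\big|\,s\big],\ \alpha\sim\pi(\cdot\mid s),\ s'\sim P(\cdot\mid\alpha,s),$$ $$(\mathcal{T}^{\tau}_{*}V)(s)=\max_{\alpha\in\mathcal{A}(s)}Q_{\tau}\big[r(\alpha,s)+\beta V(s')\,\big|\,s\big],\ s'\sim P(\cdot\mid\alpha,s).$$ Then $\mathcal{T}^{\tau}_{\pi}$ and $\mathcal{T}^{\tau}_{*}$ admit unique fixed points $v^{\tau}_{\pi}$ and $v^{\tau}_{*}$ (among bounded functions), and for any bounded initial $V_0$ the iterations $V_{k+1}=\mathcal{T}^{\tau}_{\pi}V_k$ and $V_{k+1}=\mathcal{T}^{\tau}_{*}V_k$ converge in $\|\cdot\|_\infty$ to $v^{\tau}_{\pi}$ and $v^{\tau}_{*}$ respectively.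
   Context: For a real random variable $Z$ with CDF $F_Z$, $Q_\tau[Z]=\inf\{x\in\mathbb{R}: F_Z(x)\ge\tau\}$; $Q_\tau[\,\cdot\mid s]$ is the $\tau$-quantile of the conditional law given the current state $s$. The operators are taken to be well defined, mapping bounded (measurable) functions to bounded (measurable) functions, with the maximum over $\mathcal{A}(s)$ attained. $\|f\|_\infty=\sup_{s}|f(s)|$. *)

(* Defs.v *)
From HB Require Import structures.
From mathcomp Require Import all_boot all_order all_algebra.
From mathcomp Require Import all_classical all_reals all_analysis.
From mathcomp Require Import measurable_realfun kernel.
Set Implicit Arguments. Unset Strict Implicit. Unset Printing Implicit Defensive.
Import Order.TTheory GRing.Theory Num.Theory.
Local Open Scope classical_set_scope.
Local Open Scope ring_scope.

Section Defs.
Context {R : realType}.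

(* tau-quantile of a law given by its CDF F : Q_tau = inf {x | F x >= tau} *)
Definition quantile (F : R -> \bar R) (tau : R) : R :=
  inf [set x : R | (tau%:E <= F x)%E].

Definition supnorm {T : Type} (f : T -> R) : R :=
  sup [set `|f t| | t in [set: T]].

Context {d1 d2 : measure_display} {S : measurableType d1} {Act : measurableType d2}.

(* (T^tau_pi V)(s) = Q_tau[ r(a,s) + beta V(s') | s ], a ~ pi(.|s), s' ~ P(.|a,s);
   CDF: x |-> \int pi(da|s) P({s' | r(a,s) + beta V(s') <= x} | a, s) *)
Definition Tpi (P : Act -> S -> probability S R) (r : Act -> S -> R)
  (pi : S -> probability Act R) (beta tau : R) (V : S -> R) (s : S) : R :=
  quantile (fun x => \int[pi s]_(a in [set: Act])
                       P a s [set s' | (r a s + beta * V s' <= x)%R])%E tau.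

Definition Qact (P : Act -> S -> probability S R) (r : Act -> S -> R)
  (beta tau : R) (V : S -> R) (a : Act) (s : S) : R :=
  quantile (fun x => P a s [set s' | r a s + beta * V s' <= x]) tau.

(* (T^tau_* V)(s) = max_{a in A(s)} Qact ... (the max is assumed attained) *)
Definition Tstar (A : S -> set Act) (P : Act -> S -> probability S R)
  (r : Act -> S -> R) (beta tau : R) (V : S -> R) (s : S) : R :=
  sup [set Qact P r beta tau V a s | a in A s].

End Defs.

(* Main.v *)
Require Import Defs.
From HB Require Import structures.
From mathcomp Require Import all_boot all_order all_algebra.
From mathcomp Require Import all_classical all_reals all_analysis.
From mathcomp Require Import measurable_realfun kernel.
From mathcomp Require Import lra ring.
Set Implicit Arguments. Unset Strict Implicit. Unset Printing Implicit Defensive.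
Import Order.TTheory GRing.Theory Num.Theory.
Local Open Scope classical_set_scope.
Local Open Scope ring_scope.

Section Helpers.
Import numFieldNormedType.Exports.
Section Gen.
Context {R : realType} {T : Type}.

Lemma bnd_ex (f : T -> R) : bounded_fun f -> exists2 M, 0 < M & forall t, `|f t| <= M.
Proof.
move=> /pinfty_ex_gt0[M M0 FM]; exists M => // t; exact: FM.
Qed.

Lemma ex_bnd (f : T -> R) M : (forall t, `|f t| <= M) -> bounded_fun f.
Proof.
move=> hM; rewrite /bounded_fun /bounded_near /=; near=> M' => t _ /=.
apply: le_trans (hM t) _; near: M'; apply: nbhs_pinfty_ge; exact: num_real.
Unshelve. all: end_near. Qed.


Lemma supnorm_le (f : T -> R) M : 0 <= M -> (forall t, `|f t| <= M) ->
  0 <= supnorm f <= M.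
Proof.
move=> M0 hM; rewrite /supnorm.
have [[_ [t _ _]]|] := pselect ([set `|f t| | t in [set: T]] !=set0); last first.
  by move=> /set0P/negP/negbNE/eqP ->; rewrite sup0 lexx.
have ub : has_ubound [set `|f t| | t in [set: T]].
  by exists M => _ [t' _ <-].
apply/andP; split.
  rewrite (le_trans (normr_ge0 (f t))) //; apply: ub_le_sup => //; by exists t.
by apply: ge_sup; [exists `|f t|; exists t|move=> _ [t' _ <-]].
Qed.

Lemma geo_cvg (x : nat -> R) l b K : 0 < b < 1 ->
  (forall k, `|x k - l| <= b ^+ k * K) -> x @ \oo --> l.
Proof.
move=> /andP[b0 b1] hx; apply/subr_cvg0.
have hb : (fun k => b ^+ k * K) @ \oo --> 0.
  rewrite -(mul0r K); apply: cvgMl; apply: cvg_expr.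
  by rewrite ger0_norm ?ltW.
have hb' : (fun k => - (b ^+ k * K)) @ \oo --> 0.
  by rewrite -oppr0; apply: cvgN.
apply: (squeeze_cvgr _ hb' hb); near=> k.
by have := hx k; rewrite ler_norml.
Unshelve. all: end_near. Qed.

End Gen.

Section FP.
Context d (S : measurableType d) (R : realType).
Definition good (V : S -> R) := measurable_fun [set: S] V /\ bounded_fun V.
Variables (T : (S -> R) -> (S -> R)) (b : R).
Hypothesis b01 : 0 < b < 1.
Hypothesis Tgood : forall V, good V -> good (T V).
Hypothesis Tmono : forall V W c, good V -> good W ->
  (forall s, V s <= W s + c) -> forall s, T V s <= T W s + b * c.

Lemma Tlip V W c : good V -> good W -> (forall s, `|V s - W s| <= c) ->
  forall s, `|T V s - T W s| <= b * c.
Proof.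
move=> gV gW h s.
have h1 t : V t <= W t + c by have := h t; rewrite ler_norml => /andP[_]; lra.
have h2 t : W t <= V t + c by have := h t; rewrite ler_norml => /andP[+ _]; lra.
have := Tmono gV gW h1 s; have := Tmono gW gV h2 s.
rewrite ler_norml; lra.
Qed.

Lemma iter_good k V : good V -> good (iter k T V).
Proof. by move=> gV; elim: k => //= k IH; exact: Tgood. Qed.

Lemma iter_lip k V W c : good V -> good W -> (forall s, `|V s - W s| <= c) ->
  forall s, `|iter k T V s - iter k T W s| <= b ^+ k * c.
Proof.
move=> gV gW h; elim: k => [|k IH] s /=; first by rewrite expr0 mul1r.
rewrite exprS -mulrA; apply: Tlip => //; exact: iter_good.
Qed.

Lemma fp_main : exists v : S -> R,
  [/\ measurable_fun [set: S] v, bounded_fun v, T v = v,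
      (forall w : S -> R, measurable_fun [set: S] w -> bounded_fun w ->
            T w = w -> w = v) &
      (forall V0 : S -> R, measurable_fun [set: S] V0 -> bounded_fun V0 ->
            (fun k : nat => supnorm (iter k T V0 \- v)) @ \oo --> 0%R)].
Proof.
have /andP[b0 b1] := b01.
have g0 : good (fun _ => 0).
  by split; [exact: measurable_cst | apply: (@ex_bnd _ _ _ 0) => t; rewrite normr0].
pose u k := iter k T (fun _ => 0).
have [M0 M00 hM0] := bnd_ex (Tgood g0).2.
have hstep k s : `|u k.+1 s - u k s| <= b ^+ k * M0.
  rewrite /u iterSr; apply: iter_lip => //; first exact: Tgood.
  by move=> t; rewrite subr0; exact: hM0.
pose K := M0 / (1 - b).
have hK : K * (1 - b) = M0 by rewrite /K divfK // subr_eq0 gt_eqF.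
have K0 : 0 < K by rewrite /K divr_gt0 // subr_gt0.
have key s : forall k, `|u k s - limn (fun k : nat => (u k s : R))| <= b ^+ k * K.
  pose up k := u k s + b ^+ k * K.
  pose lo k := u k s - b ^+ k * K.
  have e k : b ^+ k * M0 = b ^+ k * K - b ^+ k.+1 * K.
    by rewrite -hK exprS; ring.
  have bk k : 0 <= b ^+ k * K by rewrite mulr_ge0 // ?exprn_ge0 ?ltW.
  have upd : nonincreasing_seq up.
    apply/nonincreasing_seqP => k; rewrite /up.
    have := hstep k s; rewrite ler_norml e; lra.
  have lon : nondecreasing_seq lo.
    apply/nondecreasing_seqP => k; rewrite /lo.
    have := hstep k s; rewrite ler_norml e; lra.
  have u0 : u 0%N s = 0 by [].
  have lo0 : lo 0%N = - K by rewrite /lo u0 expr0 mul1r sub0r.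
  have up0 : up 0%N = K by rewrite /up u0 expr0 mul1r add0r.
  have cup : cvgn up.
    apply: nonincreasing_is_cvgn => //; exists (- K) => _ [k _ <-].
    rewrite -lo0 (le_trans (lon _ _ (leq0n k))) // /lo /up.
    have := bk k; lra.
  have hb : (fun k => b ^+ k * K) @ \oo --> 0.
    rewrite -(mul0r K); apply: cvgMl; apply: cvg_expr.
    by rewrite ger0_norm ?ltW.
  have cu : (fun k => u k s) @ \oo --> limn up.
    have -> : (fun k => u k s) = (fun k => up k - b ^+ k * K).
      by apply/funext => k; rewrite /up addrK.
    by rewrite -[limn up]subr0; apply: cvgB.
  have clo : lo @ \oo --> limn up.
    by rewrite -[limn up]subr0; apply: cvgB.
  have el : limn (fun k : nat => (u k s : R)) = limn up by exact: cvg_lim.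
  have el2 : limn lo = limn up by exact: cvg_lim.
  move=> k; rewrite el.
  have h1 := nonincreasing_cvgn_ge upd cup k.
  have h2 := nondecreasing_cvgn_le lon (cvgP _ clo) k.
  rewrite el2 /lo in h2; rewrite /up in h1.
  rewrite ler_norml; lra.
pose v s := limn (fun k : nat => (u k s : R)).
have hv k s : `|u k s - v s| <= b ^+ k * K := key s k.
have gu k : good (u k) by apply: iter_good.
have gv : good v.
  split.
    apply: (measurable_fun_cvg (h := u)) => [m|s _]; first exact: (gu m).1.
    exact: (geo_cvg b01 (hv ^~ s)).
  apply: (@ex_bnd _ _ _ K) => s.
  by have := hv 0%N s; rewrite expr0 mul1r /u /= sub0r normrN.
have hfix : T v = v.
  apply/funext => s.
  have c1 : (fun k => u k.+1 s) @ \oo --> T v s.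
    apply: (geo_cvg (K := b * K) b01) => k.
    rewrite /u /= mulrCA; apply: Tlip; [exact: gu|exact: gv|move=> t; exact: hv].
  have c2 : (fun k => u k.+1 s) @ \oo --> v s.
    apply: (geo_cvg (K := b * K) b01) => k.
    by rewrite mulrA -exprSr; exact: hv.
  exact: (cvg_unique _ c1 c2).
have hiter w k : T w = w -> iter k T w = w.
  by move=> hw; elim: k => //= k ->.
have lipv w : good w -> exists2 c, 0 < c & forall k s,
    `|iter k T w s - v s| <= b ^+ k * c.
  move=> gw; have [Mw Mw0 hMw] := bnd_ex gw.2.
  have [Mv Mv0 hMv] := bnd_ex gv.2.
  exists (Mw + Mv); first exact: addr_gt0.
  move=> k s; have -> : v s = iter k T v s by rewrite hiter. apply: iter_lip => // t.
  exact: le_trans (ler_normB _ _) (lerD (hMw t) (hMv t)).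
exists v; split => //; [exact: gv.1|exact: gv.2| |].
  move=> w mw bw hw; apply/funext => s.
  have [c c0 hc] := lipv w (conj mw bw).
  have c1 : (fun _ : nat => w s) @ \oo --> v s.
    apply: (geo_cvg (K := c) b01) => k.
    by have := hc k s; rewrite hiter.
  exact: (cvg_unique _ (cvg_cst (w s)) c1).
move=> V0 mV0 bV0.
have [c c0 hc] := lipv V0 (conj mV0 bV0).
apply: (geo_cvg (K := c) b01) => k.
have /andP[h1 h2] := @supnorm_le _ _ (iter k T V0 \- v) (b ^+ k * c)
  (mulr_ge0 (exprn_ge0 _ (ltW b0)) (ltW c0)) (hc k).
by rewrite subr0 ger0_norm.
Qed.
End FP.

Section Quant.
Context {R : realType}.
Lemma quantile_shift (FV FW : R -> \bar R) tau e :
  has_lbound [set x | (tau%:E <= FV x)%E] -> [set x | (tau%:E <= FW x)%E] !=set0 ->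
  (forall x, (FW x <= FV (x + e)%R)%E) -> quantile FV tau <= quantile FW tau + e.
Proof.
move=> lb ne h; rewrite /quantile -lerBlDr; apply: lb_le_inf => // y hy /=.
rewrite lerBlDr; apply: (ge_inf lb) => /=; exact: le_trans hy (h y).
Qed.

Lemma sup_attained (E : set R) m : E m -> (forall y, E y -> y <= m) -> sup E = m.
Proof.
move=> Em ub; apply/eqP; rewrite eq_le; apply/andP; split.
  by apply: ge_sup; [exists m|].
by apply: ub_le_sup => //; exists m.
Qed.
End Quant.

Section Ops.
Context d1 d2 (S : measurableType d1) (Act : measurableType d2) (R : realType).

Lemma mset (f : S -> R) x : measurable_fun [set: S] f -> measurable [set t | f t <= x].
Proof.
move=> mf; have := mf measurableT `]-oo, x]%classic (measurable_itv _).
by rewrite setTI; congr measurable; apply/seteqP; split => t /=; rewrite in_itv /=.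
Qed.

Lemma int_mono (mu : {measure set Act -> \bar R}) (f g : Act -> \bar R) :
  (forall x, (0 <= f x)%E) -> (forall x, (f x <= g x)%E) ->
  (\int[mu]_(x in [set: Act]) f x <= \int[mu]_(x in [set: Act]) g x)%E.
Proof.
move=> f0 fg; rewrite !ge0_integralTE //; last by move=> x; exact: le_trans (f0 x) (fg x).
apply: ereal_sup_le => _ [h hf <-]; exists h => // x; exact: le_trans (hf x) (fg x).
Qed.

Lemma set_empty (V : S -> R) ra beta Mr MV y : 0 < beta -> `|ra| <= Mr ->
  (forall t, `|V t| <= MV) -> y < - (Mr + beta * MV) ->
  [set t | ra + beta * V t <= y] = set0.
Proof.
move=> b0 hr hV hy; apply/seteqP; split => t //= ht.
have := hV t; rewrite ler_norml => /andP[h1 _].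
have := ler_wpM2l (ltW b0) h1; rewrite mulrN.
move: hr; rewrite ler_norml => /andP[h2 _]; lra.
Qed.

Lemma set_full (V : S -> R) ra beta Mr MV : 0 < beta -> `|ra| <= Mr ->
  (forall t, `|V t| <= MV) ->
  [set t | ra + beta * V t <= Mr + beta * MV] = setT.
Proof.
move=> b0 hr hV; apply/seteqP; split => t //= _.
have := hV t; rewrite ler_norml => /andP[_ h1].
have := ler_wpM2l (ltW b0) h1.
move: hr; rewrite ler_norml => /andP[_ h2]; lra.
Qed.

Lemma set_incl (V W : S -> R) ra beta c x : 0 < beta ->
  (forall t, V t <= W t + c) ->
  [set t | ra + beta * W t <= x] `<=` [set t | ra + beta * V t <= x + beta * c].
Proof.
move=> b0 hc t /= h; have := ler_wpM2l (ltW b0) (hc t); rewrite mulrDr; lra.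
Qed.

Lemma set_meas (V : S -> R) ra beta x : measurable_fun [set: S] V ->
  measurable [set t | ra + beta * V t <= x].
Proof.
move=> mV; apply: mset; apply: measurable_funD => //; apply: measurable_funM => //.
Qed.
End Ops.
End Helpers.
Unset Implicit Arguments.
Set Strict Implicit.

Theorem corollary1 (d1 d2 : measure_display) (S : measurableType d1)
  (Act : measurableType d2) (R : realType)
  (A : S -> set Act) (P : Act -> S -> probability S R)
  (r : Act -> S -> R) (beta tau : R) (pi : S -> probability Act R) :
  (* transition kernel and policy are measurable kernels *)
  (forall B : set S, measurable B ->
     measurable_fun [set: Act * S] ((fun p : Act * S => P p.1 p.2 B) : Act * S -> \bar R)) ->
  (forall B : set Act, measurable B ->
     measurable_fun [set: S] ((fun s => pi s B) : S -> \bar R)) ->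
  (* bounded measurable reward *)
  measurable_fun [set: Act * S] (fun p : Act * S => r p.1 p.2) ->
  bounded_fun (fun p : Act * S => r p.1 p.2) ->
  0 < beta < 1 -> 0 < tau < 1 ->
  (* the operators are well defined on bounded measurable functions *)
  (forall V : S -> R, measurable_fun [set: S] V -> bounded_fun V ->
     measurable_fun [set: S] (Tpi P r pi beta tau V) /\
     bounded_fun (Tpi P r pi beta tau V)) ->
  (forall V : S -> R, measurable_fun [set: S] V -> bounded_fun V ->
     measurable_fun [set: S] (Tstar A P r beta tau V) /\
     bounded_fun (Tstar A P r beta tau V)) ->
  (* the maximum over A(s) is attained *)
  (forall V : S -> R, measurable_fun [set: S] V -> bounded_fun V ->
     forall s, exists2 a, A s a &
       forall b, A s b -> Qact P r beta tau V b s <= Qact P r beta tau V a s) ->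
  (exists v : S -> R,
     [/\ measurable_fun [set: S] v, bounded_fun v,
         Tpi P r pi beta tau v = v,
         (forall w : S -> R, measurable_fun [set: S] w -> bounded_fun w ->
            Tpi P r pi beta tau w = w -> w = v) &
         (forall V0 : S -> R, measurable_fun [set: S] V0 -> bounded_fun V0 ->
            (fun k : nat => supnorm (iter k (Tpi P r pi beta tau) V0 \- v))
              @ \oo --> 0%R)])
  /\
  (exists v : S -> R,
     [/\ measurable_fun [set: S] v, bounded_fun v,
         Tstar A P r beta tau v = v,
         (forall w : S -> R, measurable_fun [set: S] w -> bounded_fun w ->
            Tstar A P r beta tau w = w -> w = v) &
         (forall V0 : S -> R, measurable_fun [set: S] V0 -> bounded_fun V0 ->
            (fun k : nat => supnorm (iter k (Tstar A P r beta tau) V0 \- v))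
              @ \oo --> 0%R)]).
Proof.
move=> hP hpi mr br /andP[b0 b1] /andP[t0 t1] hTpi hTstar hmax.
have [Mr Mr0 hMr] := bnd_ex br.
have hr a s : `|r a s| <= Mr := hMr (a, s).
have b01 : 0 < beta < 1 by apply/andP.
have hQ V W c a s : good V -> good W -> (forall t, V t <= W t + c) ->
    Qact P r beta tau V a s <= Qact P r beta tau W a s + beta * c.
  move=> gV gW hc; rewrite /Qact.
  have [MV _ hMV] := bnd_ex gV.2; have [MW _ hMW] := bnd_ex gW.2.
  apply: quantile_shift.
  - exists (- (Mr + beta * MV)) => y /= hy; rewrite leNgt; apply/negP => hlt.
    by move: hy; rewrite (set_empty b0 (hr a s) hMV hlt) measure0 lee_fin; lra.
  - exists (Mr + beta * MW) => /=.
    by rewrite (set_full b0 (hr a s) hMW) probability_setT lee_fin; exact: ltW.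
  - move=> x; apply: le_measure; rewrite ?inE.
    + apply: set_meas; exact: gW.1.
    + apply: set_meas; exact: gV.1.
    + exact: set_incl.
split.
  apply: (fp_main (T := Tpi P r pi beta tau) (b := beta)) => //.
    by move=> V [mV bV]; exact: hTpi.
  move=> V W c gV gW hc s; rewrite /Tpi.
  have [MV _ hMV] := bnd_ex gV.2; have [MW _ hMW] := bnd_ex gW.2.
  apply: quantile_shift.
  - exists (- (Mr + beta * MV)) => y /= hy; rewrite leNgt; apply/negP => hlt.
    move: hy.
    under eq_integral => a _ do rewrite (set_empty b0 (hr a s) hMV hlt) measure0.
    by rewrite integral0 lee_fin; lra.
  - exists (Mr + beta * MW) => /=.
    under eq_integral => a _ do rewrite (set_full b0 (hr a s) hMW) probability_setT.
    rewrite (integral_cst (pi s) measurableT 1) mul1e.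
    rewrite [X in (_ <= X)%E](_ : _ = 1%E); last exact: probability_setT.
    rewrite lee_fin.
    exact: ltW.
  - move=> x; apply: int_mono => a; first exact: measure_ge0.
    apply: le_measure; rewrite ?inE.
    + apply: set_meas; exact: gW.1.
    + apply: set_meas; exact: gV.1.
    + exact: set_incl.
apply: (fp_main (T := Tstar A P r beta tau) (b := beta)) => //.
  by move=> V [mV bV]; exact: hTstar.
move=> V W c gV gW hc s; rewrite /Tstar.
have [aV AaV hV] := hmax V gV.1 gV.2 s.
have [aW AaW hW] := hmax W gW.1 gW.2 s.
rewrite (@sup_attained _ _ (Qact P r beta tau V aV s)); last 2 first.
- by exists aV.
- by move=> _ [a' Aa' <-]; exact: hV.
rewrite (@sup_attained _ _ (Qact P r beta tau W aW s)); last 2 first.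
- by exists aW.
- by move=> _ [a' Aa' <-]; exact: hW.
apply: le_trans (hQ V W c aV s gV gW hc) _.
by rewrite lerD2r; exact: hW.
Qed.
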